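(* Let $B$ be a finite set, let $\sigma,\mu\in\mathrm{Sym}(B)$ and let $B'\subseteq B$. Then \[\sigma_{B'}\,\mu_{B'}=(\sigma\,\mu_{B'})_{B'}\qquad\text{and}\qquad \sigma_{|B'}\,\mu_{|B'}=(\sigma\,\mu_{B'})_{|B'}.\]
   Context: Permutations are composed as functions: $\sigma\mu=\sigma\circ\mu$. For $\mu\in\mathrm{Sym}(B)$ and $B'\subseteq B$, the restriction $\mu_{|B'}\in\mathrm{Sym}(B')$ is defined by $\mu_{|B'}(b)=\mu^k(b)$ for $b\in B'$, where $k$ is the least positive integer with $\mu^k(b)\in B'$. The cutting-out $\mu_{B'}\in\mathrm{Sym}(B)$ is the permutation equal to $\mu_{|B'}$ on $B'$ and to the identity on $B\setminus B'$. *)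

(* Defs.v *)
From mathcomp Require Import all_boot all_fingroup.
From Stdlib Require Import Lia. From mathcomp Require Import zify.
Set Implicit Arguments. Unset Strict Implicit. Unset Printing Implicit Defensive.
Local Open Scope group_scope.

Section Restriction.
Variable T : finType.
Implicit Types (mu : {perm T}) (A : {set T}).

(* Paper convention: (s t) = s o t.  MathComp's (s * t) applies s first,
   so the paper product s t is (t * s)%g. *)
Definition compp (s t : {perm T}) : {perm T} := t * s.

Lemma comppE s t x : compp s t x = s (t x).
Proof. by rewrite /compp permM. Qed.

Definition retk mu A (b : T) : nat :=
  (find (fun k => (mu ^+ k.+1) b \in A) (iota 0 #[mu])).+1.

Definition retf mu A (b : T) : T := (mu ^+ retk mu A b) b.

Lemma retk_spec mu A b : b \in A ->
  [/\ 0 < retk mu A b, (mu ^+ retk mu A b) b \in A &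
      forall j, 0 < j < retk mu A b -> (mu ^+ j) b \notin A].
Proof.
move=> bA.
set p := (fun k => (mu ^+ k.+1) b \in A).
have hp : has p (iota 0 #[mu]).
  apply/hasP; exists (#[mu].-1); first by rewrite mem_iota add0n prednK ?order_gt0 //= ltnSn.
  by rewrite /p prednK ?order_gt0 // expg_order perm1.
have hs : find p (iota 0 #[mu]) < size (iota 0 #[mu]) by rewrite -has_find.
split => //.
  have := nth_find 0 hp; rewrite nth_iota ?add0n //; by rewrite size_iota in hs.
move=> j /andP[j0 jk].
have := @before_find _ 0 p (iota 0 #[mu]) j.-1.
rewrite nth_iota; last by rewrite size_iota in hs; rewrite /retk -/p in jk; lia.
rewrite add0n /p prednK // => H; apply/negP => H'; move: H; rewrite H'.
move=> H; suff : true = false by []; apply: H; rewrite /retk in jk; lia.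
Qed.

Lemma retf_in mu A b : b \in A -> retf mu A b \in A.
Proof. by case/(retk_spec mu) => _ ? _. Qed.

Lemma retf_inj mu A b1 b2 : b1 \in A -> b2 \in A ->
  retf mu A b1 = retf mu A b2 -> b1 = b2.
Proof.
move=> h1 h2.
wlog le : b1 b2 h1 h2 / retk mu A b1 <= retk mu A b2.
  move=> W E; case: (leqP (retk mu A b1) (retk mu A b2)) => [l|l]; first exact: W.
  by symmetry; apply: W => //; apply: ltnW.
rewrite /retf => E.
have E2 : (mu ^+ retk mu A b2) b2 =
          (mu ^+ retk mu A b1) ((mu ^+ (retk mu A b2 - retk mu A b1)) b2).
  by rewrite -permM -expgD subnK.
rewrite E2 in E; move/perm_inj: E => E.
case: (posnP (retk mu A b2 - retk mu A b1)) => d.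
  by rewrite E d expg0 perm1.
have [_ _ H] := retk_spec mu h2.
have : (mu ^+ (retk mu A b2 - retk mu A b1)) b2 \notin A.
  apply: H; rewrite d /=; have [k0 _ _] := retk_spec mu h1; lia.
by rewrite -E h1.
Qed.

Definition cutfun mu A (b : T) : T := if b \in A then retf mu A b else b.

Lemma cutfun_inj mu A : injective (cutfun mu A).
Proof.
move=> b1 b2; rewrite /cutfun.
case: (boolP (b1 \in A)) => h1; case: (boolP (b2 \in A)) => h2 //.
- exact: retf_inj.
- by move=> E; move: (retf_in mu h1); rewrite E (negPf h2).
- by move=> E; move: (retf_in mu h2); rewrite -E (negPf h1).
Qed.

(* cutting-out mu_{A} in Sym(B) *)
Definition cutout mu A : {perm T} := perm (@cutfun_inj mu A).

Definition restrfun mu A (x : {b : T | b \in A}) : {b : T | b \in A} :=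
  exist _ (retf mu A (val x)) (retf_in mu (valP x)).

Lemma restrfun_inj mu A : injective (@restrfun mu A).
Proof.
move=> [x hx] [y hy] /(congr1 val) /= E.
by apply: val_inj => /=; exact: retf_inj hx hy E.
Qed.

(* restriction mu_{|A} in Sym(A) *)
Definition restr mu A : {perm {b : T | b \in A}} := perm (@restrfun_inj mu A).

End Restriction.

(* Main.v *)
Require Import Defs.
From mathcomp Require Import all_boot all_fingroup.
From Stdlib Require Import Lia. From mathcomp Require Import zify.
Local Open Scope group_scope.

Lemma retf_char (T : finType) (mu : {perm T}) (A : {set T}) b k :
  b \in A -> 0 < k -> (mu ^+ k) b \in A ->
  (forall j, 0 < j < k -> (mu ^+ j) b \notin A) ->
  retf mu A b = (mu ^+ k) b.
Proof.
move=> bA k0 kA H; have [r0 rA Hr] := retk_spec mu bA.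
rewrite /retf; case: (ltngtP (retk mu A b) k) => c.
- have := H (retk mu A b); rewrite r0 c rA; by move=> /(_ isT).
- have := Hr k; rewrite k0 c kA; by move=> /(_ isT).
- by rewrite c.
Qed.

Lemma key (T : finType) (sigma mu : {perm T}) (A : {set T}) b :
  b \in A ->
  retf (compp sigma (cutout mu A)) A b = retf sigma A (retf mu A b).
Proof.
move=> bA; set c := retf mu A b.
have cA : c \in A by exact: retf_in.
have [k0 kA Hk] := retk_spec sigma cA.
set k := retk sigma A c in k0 kA Hk *.
set tau := compp sigma (cutout mu A).
have E : forall j, 0 < j <= k -> (tau ^+ j) b = (sigma ^+ j) c.
  elim=> [//|j IH] /andP[_ jk].
  rewrite (expgSr tau) (expgSr sigma) !permM.
  case: j IH jk => [|j] IH jk.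
    by rewrite !expg0 !perm1 /cutout permE /cutfun bA.
  rewrite IH; last by apply/andP; split => //; lia.
  rewrite /cutout permE /cutfun.
  have : (sigma ^+ j.+1) c \notin A by apply: Hk; apply/andP; split => //.
  by move/negPf => ->.
rewrite /retf -/k -(E k); last by apply/andP; split => //.
apply: retf_char => //.
- by rewrite E //; apply/andP; split => //.
- move=> j /andP[j0 jk]; rewrite E; first by apply: Hk; apply/andP; split.
  by apply/andP; split => //; apply: ltnW.
Qed.

Theorem lemma1 (T : finType) (sigma mu : {perm T}) (B' : {set T}) :
  compp (cutout sigma B') (cutout mu B') = cutout (compp sigma (cutout mu B')) B' /\
  compp (restr sigma B') (restr mu B') = restr (compp sigma (cutout mu B')) B'.
Proof.
split.
- apply/permP => b; rewrite comppE /cutout !permE /cutfun.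
  case: (boolP (b \in B')) => bA.
    by rewrite retf_in // key.
  by rewrite (negPf bA).
- apply/permP => x; apply: val_inj.
  rewrite comppE /restr !permE /restrfun /=.
  by rewrite key // (valP x).
Qed.
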